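(* Under $\mathsf{SBIM}(n,k,p,q_1,q_2)$ with $m=n/k$, every adaptive group testing scheme that exactly recovers $X$ from noiseless tests, using $T$ tests, satisfies $$\mathbb{E}[T]\ \ge\ m\cdot\mathbb{E}_{Z,Z'}\Big[(k-Z)\,\mathsf{h}_\mathsf{b}\big(1-(1-q_1)^Z(1-q_2)^{Z'}\big)\Big],$$ where $Z\sim\mathsf{Binom}(k,p)$ and $Z'\sim\mathsf{Binom}(n-k,p)$ are independent.
   Context: Stochastic block infection model $\mathsf{SBIM}(n,k,p,q_1,q_2)$: the vertex set $[n]$ is partitioned into $m=n/k$ known communities $\mathcal{C}_1,\dots,\mathcal{C}_m$, each of size $k$. Each vertex is independently a seed with probability $p\in(0,1]$. Then every seed $v$ independently infects each other vertex $u$ in its own community with probability $q_1\in[0,1]$ and each vertex outside its community with probability $q_2\in[0,1]$ (all transmission events mutually independent and independent of seed selection). $X_v=1$ iff $v$ is a seed or is infected by some seed. A test on $S$ returns $\bigvee_{i\in S}X_i$ noiselessly; adaptive schemes choose tests based on previous outcomes and must recover $X$ exactly. $\mathsf{h}_\mathsf{b}$ is the binary entropy function in bits. *)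

(* Defs.v *)
From mathcomp Require Import all_boot all_order all_algebra.
From mathcomp Require Import reals exp.
Set Implicit Arguments. Unset Strict Implicit. Unset Printing Implicit Defensive.
Import Order.TTheory GRing.Theory Num.Theory.
Local Open Scope ring_scope.

Definition xlog2 {R : realType} (x : R) : R :=
  if x == 0 then 0 else x * ln x / ln 2.
Definition hb {R : realType} (x : R) : R := - xlog2 x - xlog2 (1 - x).

Definition bern {R : realType} (r : R) (b : bool) : R := if b then r else 1 - r.

Definition binpmf {R : realType} (N : nat) (p : R) (z : nat) : R :=
  'C(N, z)%:R * p ^+ z * (1 - p) ^+ (N - z).

(* Vertices are 'I_N with N = m * k; community of v is v %/ k
   (communities C_j = {j k, ..., j k + k - 1}). *)
Definition same_comm (k : nat) {N : nat} (u v : 'I_N) : bool := (u %/ k == v %/ k)%N.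

(* Transmission probability from seed u to vertex v (self-transmission is
   irrelevant; it is given probability 0). *)
Definition trans_prob {R : realType} (k : nat) (q1 q2 : R) {N : nat}
  (u v : 'I_N) : R :=
  if u == v then 0 else if same_comm k u v then q1 else q2.

(* Sample space: seed indicators and transmission indicators
   (w.2 (u, v) = true means "u would infect v if u is a seed"). *)
Definition outcome (N : nat) : finType :=
  ({ffun 'I_N -> bool} * {ffun ('I_N * 'I_N) -> bool})%type.

Definition sbim_weight {R : realType} {N : nat} (k : nat) (p q1 q2 : R)
  (w : outcome N) : R :=
  (\prod_(v : 'I_N) bern p (w.1 v)) *
  \prod_(uv : 'I_N * 'I_N) bern (trans_prob k q1 q2 uv.1 uv.2) (w.2 uv).

Definition infection {N : nat} (w : outcome N) : {ffun 'I_N -> bool} :=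
  [ffun v => w.1 v || [exists u, w.1 u && w.2 (u, v)]].

(* Deterministic adaptive group testing scheme as a decision tree:
   Test S t0 t1 tests the pool S and continues with t0 on a negative
   and t1 on a positive outcome; Decide y outputs the estimate y. *)
Inductive gt_scheme (N : nat) : Type :=
| Decide of {ffun 'I_N -> bool}
| Test of {set 'I_N} & gt_scheme N & gt_scheme N.

Definition test_result {N : nat} (S : {set 'I_N}) (x : {ffun 'I_N -> bool}) : bool :=
  [exists i in S, x i].

Fixpoint gt_run {N : nat} (t : gt_scheme N) (x : {ffun 'I_N -> bool})
  : nat * {ffun 'I_N -> bool} :=
  match t with
  | Decide y => (0%N, y)
  | Test pool t0 t1 =>
      let r := if test_result pool x then gt_run t1 x else gt_run t0 x in
      (r.1.+1, r.2)
  end.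

Definition exact_recovery {R : realType} {N : nat} (k : nat) (p q1 q2 : R)
  (t : gt_scheme N) : Prop :=
  forall w : outcome N, 0 < sbim_weight k p q1 q2 w ->
    (gt_run t (infection w)).2 = infection w.

Definition expected_tests {R : realType} {N : nat} (k : nat) (p q1 q2 : R)
  (t : gt_scheme N) : R :=
  \sum_(w : outcome N) sbim_weight k p q1 q2 w * ((gt_run t (infection w)).1)%:R.

(* Main.v *)
Require Import Defs.
From mathcomp Require Import all_boot all_order all_algebra.
From mathcomp Require Import reals exp.
From mathcomp Require Import ring lra zify.
Set Implicit Arguments. Unset Strict Implicit. Unset Printing Implicit Defensive.
Import Order.TTheory GRing.Theory Num.Theory.
Local Open Scope ring_scope.


Section Kraft.
Variable R : realType.

Definition okb {N} (t : gt_scheme N) x := (gt_run t x).2 == x.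

Lemma sum_sub_le (I : finType) (P Q : pred I) (F : I -> R) :
  (forall i, 0 <= F i) -> \sum_(i | P i && Q i) F i <= \sum_(i | P i) F i.
Proof.
move=> F0; rewrite [X in _ <= X](bigID Q) /= lerDl; apply: sumr_ge0 => i _; exact: F0.
Qed.

Lemma kraft N (t : gt_scheme N) :
  \sum_(x | okb t x) (2^-1 : R) ^+ (gt_run t x).1 <= 1.
Proof.
elim: t => [y|S t0 IH0 t1 IH1].
  rewrite /okb /= (big_pred1 y) ?expr0 // => x; by rewrite /= eq_sym.
rewrite (bigID (test_result S)) /=.
have h0 : 0 <= (2^-1 : R) by lra.
have E1 : \sum_(x | okb (Test S t0 t1) x && test_result S x) (2^-1:R) ^+ (gt_run (Test S t0 t1) x).1
   = 2^-1 * \sum_(x | okb t1 x && test_result S x) (2^-1:R) ^+ (gt_run t1 x).1.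
  rewrite mulr_sumr; apply: eq_big => x; rewrite /okb /=.
    by case: (test_result S x); rewrite ?andbF ?andbT.
  by case/andP => _ ->; rewrite exprS.
have E0 : \sum_(x | okb (Test S t0 t1) x && ~~ test_result S x) (2^-1:R) ^+ (gt_run (Test S t0 t1) x).1
   = 2^-1 * \sum_(x | okb t0 x && ~~ test_result S x) (2^-1:R) ^+ (gt_run t0 x).1.
  rewrite mulr_sumr; apply: eq_big => x; rewrite /okb /=.
    by case: (test_result S x); rewrite ?andbF ?andbT.
  by case/andP => _ /negbTE ->; rewrite exprS.
rewrite E1 E0.
have B1 : \sum_(x | okb t1 x && test_result S x) (2^-1:R) ^+ (gt_run t1 x).1 <= \sum_(x | okb t1 x) (2^-1:R) ^+ (gt_run t1 x).1.
  by apply: sum_sub_le => x; exact: exprn_ge0.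
have B0 : \sum_(x | okb t0 x && ~~ test_result S x) (2^-1:R) ^+ (gt_run t0 x).1 <= \sum_(x | okb t0 x) (2^-1:R) ^+ (gt_run t0 x).1.
  by apply: sum_sub_le => x; exact: exprn_ge0.
have : 0 <= \sum_(x | okb t1 x && test_result S x) (2^-1:R) ^+ (gt_run t1 x).1 by apply: sumr_ge0 => *; exact: exprn_ge0.
have : 0 <= \sum_(x | okb t0 x && ~~ test_result S x) (2^-1:R) ^+ (gt_run t0 x).1 by apply: sumr_ge0 => *; exact: exprn_ge0.
nra.
Qed.
End Kraft.



Section Gibbs.
Variable R : realType.

Definition lg (a : R) : R := if a == 0 then 0 else - ln a / ln 2.

Lemma xlog2_lg (a : R) : - xlog2 a = a * lg a.
Proof. rewrite /xlog2 /lg; case: eqP => _; [by rewrite oppr0 mulr0|]. by rewrite mulNr mulrN mulrA. Qed.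

Lemma ln_prod (I : finType) (f : I -> R) :
  (forall i, 0 < f i) -> ln (\prod_i f i) = \sum_i ln (f i).
Proof.
move=> fp.
pose K (a b : R) := 0 < a /\ ln a = b.
suff : K (\prod_i f i) (\sum_i ln (f i)) by case.
apply: (big_rec2 K); first by split; [exact: ltr01 | exact: ln1].
move=> i a b _ [ha hb]; split; first by apply: mulr_gt0.
by rewrite lnM ?hb // posrE.
Qed.

Variable (I : finType) (pmf : I -> bool -> R).
Hypothesis pmf0 : forall v b, 0 <= pmf v b.
Hypothesis pmf1 : forall v, pmf v true + pmf v false = 1.

Definition mu (x : {ffun I -> bool}) := \prod_v pmf v (x v).

Lemma mu_ge0 x : 0 <= mu x.
Proof. by apply: prodr_ge0 => v _. Qed.

Lemma marg v (g : bool -> R) :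
  \sum_(x : {ffun I -> bool}) mu x * g (x v) = \sum_b pmf v b * g b.
Proof.
pose F w b := pmf w b * (if w == v then g b else 1).
have E x : mu x * g (x v) = \prod_w F w (x w).
  rewrite /mu (bigD1 v) //= [RHS](bigD1 v) //= /F eqxx.
  rewrite mulrAC; congr (_ * _); apply: eq_bigr => w /negbTE ->.
  by rewrite mulr1.
under eq_bigr => x _ do rewrite E.
rewrite -(bigA_distr_bigA (R:=R) (fun w b => F w b)) /= (bigD1 v) //= [X in _ * X]big1 ?mulr1.
  by apply: eq_bigr => b _; rewrite /F eqxx.
by move=> w /negbTE wv; rewrite big_bool /= /F wv !mulr1 pmf1.
Qed.

Lemma mu_sum1 : \sum_x mu x = 1.
Proof.
rewrite /mu -(bigA_distr_bigA (R:=R) pmf) /=.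
by apply: big1 => v _; rewrite big_bool /= pmf1.
Qed.

Lemma entropy :
  \sum_x mu x * (\sum_v lg (pmf v (x v))) = \sum_v hb (pmf v true).
Proof.
under eq_bigr => x _ do rewrite mulr_sumr.
rewrite exchange_big /=; apply: eq_bigr => v _.
rewrite (marg v (fun b => lg (pmf v b))) big_bool /= /hb.
have -> : 1 - pmf v true = pmf v false by rewrite -(pmf1 v); ring.
by rewrite !xlog2_lg.
Qed.

Lemma ln2_gt0 : 0 < ln (2 : R).
Proof. apply: ln_gt0; lra. Qed.

Lemma term_ineq (a : R) (L : nat) : 0 < a ->
  (a - (2^-1) ^+ L) / ln 2 <= a * (L%:R + ln a / ln 2).
Proof.
move=> a0.
have c0 := ln2_gt0.
set c := ln 2 in c0 *.
have hL : 0 < (2^-1 : R) ^+ L by apply: exprn_gt0; lra.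
set y := (2^-1 : R) ^+ L / a.
have y0 : 0 < y by apply: divr_gt0.
have Hy : ln y <= y - 1.
  have := @le_ln1Dx R (y - 1).
  have -> : 1 + (y - 1) = y by ring.
  apply; lra.
have lny : ln y = - (L%:R * c) - ln a.
  rewrite /y ln_div ?posrE // lnXn; last lra.
  by rewrite lnV ?posrE; [rewrite mulNrn mulr_natl | lra].
have ya : y * a = (2^-1 : R) ^+ L by rewrite /y mulrVK ?unitfE ?gt_eqF.
rewrite -ya.
have ic : c * c^-1 = 1 by rewrite mulfV ?gt_eqF.
have ic0 : 0 < c^-1 by rewrite invr_gt0.
rewrite lny in Hy.
set l := ln a in Hy *.
set LL := (L%:R : R) in Hy *.
have : 0 <= a * (LL * c + l + y - 1) by apply: mulr_ge0; lra.
move=> H.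
have -> : (a - y * a) / c = (a - y * a) * c^-1 by [].
have -> : a * (LL + l / c) = (a * (LL * c + l)) * c^-1.
  by rewrite -mulrA mulrDl -mulrA ic mulr1.
rewrite -subr_ge0 -mulrBl; apply: mulr_ge0; lra.
Qed.

Variable (L : {ffun I -> bool} -> nat) (ok : pred {ffun I -> bool}).
Hypothesis kraftH : \sum_(x | ok x) (2^-1 : R) ^+ L x <= 1.
Hypothesis okH : forall x, 0 < mu x -> ok x.

Lemma gibbs : \sum_v hb (pmf v true) <= \sum_x mu x * (L x)%:R.
Proof.
rewrite -entropy -subr_ge0 -sumrB.
have c0 := ln2_gt0.
have T x : (mu x - (if 0 < mu x then (2^-1 : R) ^+ L x else 0)) / ln 2 <=
           mu x * (L x)%:R - mu x * (\sum_v lg (pmf v (x v))).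
  have [mx0|] := ltP 0 (mu x); last first.
    move=> mle; have -> : mu x = 0 by apply/le_anti; rewrite mle mu_ge0.
    by rewrite subr0 !mul0r subr0.
  have pp v : 0 < pmf v (x v).
    rewrite lt_def pmf0 andbT; apply/eqP => h.
    by move: mx0; rewrite /mu (bigD1 v) //= h mul0r ltxx.
  have -> : \sum_v lg (pmf v (x v)) = - ln (mu x) / ln 2.
    rewrite /mu ln_prod // -sumrN mulr_suml; apply: eq_bigr => v _.
    by rewrite /lg gt_eqF.
  rewrite -mulrBr mulNr opprK; exact: term_ineq.
apply: le_trans (ler_sum _ (fun x _ => T x)).
rewrite -mulr_suml sumrB mu_sum1; apply: mulr_ge0; last by rewrite invr_ge0 ltW.
rewrite subr_ge0; apply: le_trans kraftH.
rewrite [X in _ <= X]big_mkcond /=; apply: ler_sum => x _.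
case: ifP => [/okH -> //|_]; case: ifP => // _; apply: exprn_ge0; lra.
Qed.
End Gibbs.



Section ClaimA.
Variable R : realType.

Lemma prod_bool_nat (I : finType) (P : pred I) :
  \prod_i ((P i)%:R : R) = ([forall i, P i])%:R.
Proof.
case: (boolP [forall i, P i]) => [/forallP H|/forallPn [i /negbTE Pi]].
  by apply: big1 => i _; rewrite H.
by rewrite (bigD1 i) //= Pi mul0r.
Qed.

Lemma sum_ffun_prod (I : finType) (f : I -> bool -> R) :
  \sum_(c : {ffun I -> bool}) \prod_u f u (c u) = \prod_u (f u true + f u false).
Proof.
rewrite -(bigA_distr_bigA (R:=R) f) /=; apply: eq_bigr => u _.
by rewrite big_bool.
Qed.

Lemma bern_sum (r : R) : bern r true + bern r false = 1.
Proof. rewrite /bern; ring. Qed.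

Variable N : nat.
Variable tp : 'I_N -> 'I_N -> R.

Definition Pe (e : {ffun ('I_N * 'I_N) -> bool}) : R :=
  \prod_(uv : 'I_N * 'I_N) bern (tp uv.1 uv.2) (e uv).

Definition nu (s : {ffun 'I_N -> bool}) v : R :=
  if s v then 0 else \prod_u (if s u then 1 - tp u v else 1).

Definition pmfX s v (b : bool) : R := if b then 1 - nu s v else nu s v.

Definition uncurry (C : {ffun 'I_N -> {ffun 'I_N -> bool}}) : {ffun ('I_N * 'I_N) -> bool} :=
  [ffun uv => C uv.2 uv.1].
Definition curry (e : {ffun ('I_N * 'I_N) -> bool}) : {ffun 'I_N -> {ffun 'I_N -> bool}} :=
  [ffun v => [ffun u => e (u, v)]].

Lemma uncurryK : cancel uncurry curry.
Proof. by move=> C; apply/ffunP => v; apply/ffunP => u; rewrite !ffunE. Qed.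
Lemma curryK : cancel curry uncurry.
Proof. by move=> e; apply/ffunP => -[u v]; rewrite !ffunE. Qed.

Lemma claimA s x :
  \sum_e Pe e * ((infection (s, e) == x)%:R) = \prod_v pmfX s v (x v).
Proof.
pose H v (c : {ffun 'I_N -> bool}) : R := (\prod_u bern (tp u v) (c u)) *
   (((s v || [exists u, s u && c u]) == x v)%:R).
have E e : Pe e * ((infection (s, e) == x)%:R) = \prod_v H v (curry e v).
  rewrite /H big_split /=; congr (_ * _).
    rewrite /Pe (eq_bigr (fun p => bern (tp p.1 p.2) (e (p.1, p.2)))); last by case.
    rewrite -(pair_bigA _ (fun u v => bern (tp u v) (e (u, v)))) /=.
    rewrite exchange_big /=; apply: eq_bigr => v _; apply: eq_bigr => u _.
    by rewrite !ffunE.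
  rewrite prod_bool_nat; congr ((nat_of_bool _)%:R); apply/idP/forallP => [/eqP <- v|h].
    by rewrite !ffunE /=; apply/eqP; congr (_ || _); apply: eq_existsb => u; rewrite !ffunE.
  apply/eqP/ffunP => v; rewrite !ffunE /=; move/eqP: (h v) => <-; congr (_ || _).
  by apply: eq_existsb => u; rewrite !ffunE.
rewrite (eq_bigr _ (fun e _ => E e)).
rewrite (reindex uncurry); last by exists curry => ? _; [exact: uncurryK | exact: curryK].
under eq_bigr => C _ do rewrite uncurryK.
rewrite -(bigA_distr_bigA (R:=R) H) /=; apply: eq_bigr => v _.
rewrite /H /pmfX /nu.
case: (s v) => /=.
  rewrite -mulr_suml (sum_ffun_prod (fun u b => bern (tp u v) b)) big1 => [|u _]; last exact: bern_sum.
  by case: (x v); rewrite /= ?mul1r ?subr0.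
have D : \sum_(c : {ffun 'I_N -> bool}) (\prod_u bern (tp u v) (c u)) * ((~~ [exists u, s u && c u])%:R : R)
   = \prod_u (if s u then 1 - tp u v else 1).
  have D1 (c : {ffun 'I_N -> bool}) : (\prod_u bern (tp u v) (c u)) * ((~~ [exists u, s u && c u])%:R : R)
     = \prod_u (bern (tp u v) (c u) * ((~~ (s u && c u))%:R : R)).
    by rewrite big_split /= prod_bool_nat negb_exists.
  rewrite (eq_bigr _ (fun c _ => D1 c)).
  rewrite (sum_ffun_prod (fun u b => bern (tp u v) b * ((~~ (s u && b))%:R : R))); apply: eq_bigr => u _; case: (s u); rewrite /bern /=; ring.
have T : \sum_(c : {ffun 'I_N -> bool}) (\prod_u bern (tp u v) (c u)) = 1.
  by rewrite (sum_ffun_prod (fun u b => bern (tp u v) b)); apply: big1 => u _; rewrite bern_sum.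
case: (x v).
  rewrite -[X in _ = 1 - X]D -[X in _ = X - _]T -sumrB; apply: eq_bigr => c _; rewrite eqb_id.
  by case: [exists u, _] => /=; ring.
rewrite -[RHS]D; apply: eq_bigr => c _; by case: [exists u, _].
Qed.
End ClaimA.



Section ClaimD.
Variable R : realType.

Lemma prod_const_pred (I : finType) (P : pred I) (c : R) :
  \prod_(i | P i) c = c ^+ #|[set i | P i]|.
Proof. by rewrite prodr_const cardsE. Qed.

Lemma sum_ind_card (I : finType) (P : pred I) :
  \sum_(i : I) ((P i)%:R : R) = (#|[set i | P i]|)%:R.
Proof.
rewrite (eq_bigr (fun i => if P i then (1 : R) else 0)); last by move=> i _; case: (P i).
by rewrite -big_mkcond /= sumr_const cardsE.
Qed.

Lemma sum_ind (n i : nat) (f : nat -> R) : (i <= n)%N ->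
  \sum_(z < n.+1) ((i == z)%:R * f z) = f i.
Proof.
move=> hi; rewrite (bigD1 (inord i)) //= big1 ?addr0.
  by rewrite inordK ?ltnS // eqxx mul1r.
move=> j hj; case: eqP => [hij|]; last by rewrite mul0r.
by move: hj; rewrite -(inj_eq val_inj) /= inordK ?ltnS // hij eqxx.
Qed.

Variable (I : finType) (A : {set I}).

Lemma count_sets z z' :
  #|[set S : {set I} | (#|S :&: A| == z) && (#|S :\: A| == z')]| =
  ('C(#|A|, z) * 'C(#|~: A|, z'))%N.
Proof.
pose f (S : {set I}) := (S :&: A, S :\: A).
have finj : injective f.
  by move=> S1 S2 [e1 e2]; rewrite -(setID S1 A) -(setID S2 A) e1 e2.
rewrite -(card_imset _ finj) -!cards_draws -cardsX; 
apply: eq_card => -[B C]; rewrite !inE; apply/imsetP/andP => [[S] | [hB hC]].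
  rewrite inE => /andP [hz hz'] [-> ->]; rewrite subsetIr hz hz' /=; split => //; rewrite andbT.
  by apply/subsetP => x; rewrite !inE => /andP [].
case/andP: hB => sBA /eqP cB; case/andP: hC => sCA /eqP cC.
have BI : (B :|: C) :&: A = B.
  apply/setP => x; rewrite !inE; case xB: (x \in B).
    by rewrite (subsetP sBA).
  case xA: (x \in A); rewrite ?andbF ?andbT //=.
  by apply/negP => /(subsetP sCA); rewrite inE xA.
have CD : (B :|: C) :\: A = C.
  apply/setP => x; rewrite !inE; case xA: (x \in A) => /=.
    symmetry; apply/negP => /(subsetP sCA); rewrite inE xA.
    done.
  case xB: (x \in B) => //=; symmetry.
  by move: (subsetP sBA x xB); rewrite xA.
exists (B :|: C); last by rewrite /f BI CD.
by rewrite inE BI CD cB cC !eqxx.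
Qed.

Lemma Ps_set (p : R) (S : {set I}) :
  \prod_u bern p (u \in S) =
  p ^+ #|S :&: A| * (1 - p) ^+ (#|A| - #|S :&: A|) *
  (p ^+ #|S :\: A| * (1 - p) ^+ (#|~: A| - #|S :\: A|)).
Proof.
rewrite (bigID (fun u => u \in A)) /=.
rewrite (bigID (fun u => u \in S) (fun u => u \in A)) /=.
rewrite (bigID (fun u => u \in S) (fun u => u \notin A)) /=.
rewrite (eq_bigr (fun _ => p)); last by move=> u /andP [_ ->].
rewrite [X in _ * X * _](eq_bigr (fun _ => 1 - p)); last by move=> u /andP [_ /negbTE ->].
rewrite [X in _ * (X * _)](eq_bigr (fun _ => p)); last by move=> u /andP [_ ->].
rewrite [X in _ * (_ * X)](eq_bigr (fun _ => 1 - p)); last by move=> u /andP [_ /negbTE ->].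
rewrite !prod_const_pred.
have e1 : #|[set i | (i \in A) && (i \in S)]| = #|S :&: A|.
  by apply: eq_card => x; rewrite !inE andbC.
have e2 : #|[set i | (i \in A) && (i \notin S)]| = (#|A| - #|S :&: A|)%N.
  by rewrite -e1 -cardsD; apply: eq_card => x; rewrite !inE andbC.
have e3 : #|[set i | (i \notin A) && (i \in S)]| = #|S :\: A|.
  by apply: eq_card => x; rewrite !inE andbC.
have e4 : #|[set i | (i \notin A) && (i \notin S)]| = (#|~: A| - #|S :\: A|)%N.
  have -> : #|S :\: A| = #|~: A :&: S| by apply: eq_card => x; rewrite !inE andbC.
  by rewrite -cardsD; apply: eq_card => x; rewrite !inE andbC.
by rewrite e1 e2 e3 e4.
Qed.

Lemma claimD (p : R) (G : nat -> nat -> R) :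
  \sum_(s : {ffun I -> bool}) (\prod_u bern p (s u)) * G #|[set u | s u] :&: A| #|[set u | s u] :\: A|
  = \sum_(z < #|A|.+1) \sum_(z' < #|~: A|.+1) binpmf #|A| p z * binpmf #|~: A| p z' * G z z'.
Proof.
pose W (z z' : nat) : R := p ^+ z * (1 - p) ^+ (#|A| - z) *
  (p ^+ z' * (1 - p) ^+ (#|~: A| - z')) * G z z'.
pose H (S : {set I}) : R := W #|S :&: A| #|S :\: A|.
have E (s : {ffun I -> bool}) : (\prod_u bern p (s u)) * G #|[set u | s u] :&: A| #|[set u | s u] :\: A|
    = H [set u | s u].
  rewrite /H /W -Ps_set; congr (_ * _); apply: eq_bigr => u _; by rewrite inE.
rewrite (eq_bigr _ (fun s _ => E s)).
rewrite (reindex (fun S : {set I} => [ffun u => u \in S])); last first.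
  exists (fun s : {ffun I -> bool} => [set u | s u]) => x _.
    by apply/setP => u; rewrite !inE ffunE.
  by apply/ffunP => u; rewrite ffunE inE.
have E2 (S : {set I}) : H [set u | [ffun u => u \in S] u] =
   \sum_(z < #|A|.+1) \sum_(z' < #|~: A|.+1)
      ((#|S :&: A| == z)%:R * ((#|S :\: A| == z')%:R * W z z')).
  have -> : [set u | [ffun u => u \in S] u] = S by apply/setP => u; rewrite inE ffunE.
  rewrite (eq_bigr (fun z : 'I_#|A|.+1 => (#|S :&: A| == z)%:R * W z #|S :\: A|)).
    rewrite (sum_ind (fun z => W z #|S :\: A|)) //.
    by apply: subset_leq_card; apply: subsetIr.
  move=> z _; rewrite -mulr_sumr (sum_ind (W z)) //.
  apply: subset_leq_card; apply/subsetP => x; rewrite !inE; by case/andP.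
rewrite (eq_bigr _ (fun S _ => E2 S)) exchange_big /=; apply: eq_bigr => z _.
rewrite exchange_big /=; apply: eq_bigr => z' _.
have -> : \sum_(S : {set I}) ((#|S :&: A| == z)%:R * ((#|S :\: A| == z')%:R * W z z'))
   = (\sum_(S : {set I}) (((#|S :&: A| == z) && (#|S :\: A| == z'))%:R : R)) * W z z'.
  rewrite mulr_suml; apply: eq_bigr => S _; rewrite mulrA; congr (_ * _).
  by rewrite -natrM mulnb.
rewrite sum_ind_card count_sets natrM /W /binpmf; ring.
Qed.
End ClaimD.



Section Main.
Variable R : realType.
Variables (N k : nat) (p q1 q2 : R).
Hypotheses (hp : 0 < p <= 1) (hq1 : 0 <= q1 <= 1) (hq2 : 0 <= q2 <= 1).

Let tp := @trans_prob R k q1 q2 N.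

Lemma tp01 u v : 0 <= tp u v <= 1.
Proof. rewrite /tp /trans_prob; case: eqP => _; [by rewrite lexx ler01 | by case: ifP]. Qed.

Lemma bern_ge0 (r : R) b : 0 <= r <= 1 -> 0 <= bern r b.
Proof. by move/andP=> [h0 h1]; case: b => /=; lra. Qed.

Lemma Pe_ge0 e : 0 <= Pe tp e.
Proof. apply: prodr_ge0 => uv _; apply: bern_ge0; exact: tp01. Qed.

Definition Ps (s : {ffun 'I_N -> bool}) : R := \prod_v bern p (s v).

Lemma Ps_ge0 s : 0 <= Ps s.
Proof. apply: prodr_ge0 => v _; apply: bern_ge0; case/andP: hp => h0 h1; by rewrite h1 ltW. Qed.

Lemma nu01 s v : 0 <= nu tp s v <= 1.
Proof.
rewrite /nu; case: (s v); first by rewrite lexx ler01.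
apply/andP; split.
  apply: prodr_ge0 => u _; case: (s u); have /andP[] := tp01 u v; lra.
apply: prodr_ile1 => u _; case: (s u); have /andP[] := tp01 u v => h0 h1; apply/andP; split; lra.
Qed.

Lemma pmfX0 s v b : 0 <= pmfX tp s v b.
Proof. rewrite /pmfX; have /andP[] := nu01 s v; case: b; lra. Qed.

Lemma pmfX1 s v : pmfX tp s v true + pmfX tp s v false = 1.
Proof. rewrite /pmfX; ring. Qed.

Lemma claimA_gen s (G : {ffun 'I_N -> bool} -> R) :
  \sum_e Pe tp e * G (infection (s, e)) = \sum_x mu (pmfX tp s) x * G x.
Proof.
have E e : Pe tp e * G (infection (s, e)) =
   \sum_x G x * (Pe tp e * ((infection (s, e) == x)%:R)).
  rewrite (bigD1 (infection (s, e))) //= eqxx mulr1 big1 ?addr0 1?mulrC //.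
  by move=> x /negbTE; rewrite eq_sym => ->; rewrite mulr0 mulr0.
rewrite (eq_bigr _ (fun e _ => E e)) exchange_big /=; apply: eq_bigr => x _.
by rewrite -mulr_sumr claimA mulrC.
Qed.

Variable t : gt_scheme N.
Hypothesis rec : exact_recovery k p q1 q2 t.

Lemma step_s s : 0 < Ps s ->
  \sum_v hb (pmfX tp s v true) <=
  \sum_e Pe tp e * ((gt_run t (infection (s, e))).1)%:R.
Proof.
move=> Psp.
rewrite (claimA_gen s (fun x => ((gt_run t x).1)%:R)).
apply: (gibbs (pmfX0 s) (pmfX1 s) (L := fun x => (gt_run t x).1) (ok := okb t)).
  exact: kraft.
move=> x mx.
have : 0 < \sum_e Pe tp e * ((infection (s, e) == x)%:R) by rewrite claimA.
case: (pickP (fun e => 0 < Pe tp e * ((infection (s, e) == x)%:R))) => [e He|H]; last first.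
  move=> hs; suff : \sum_e Pe tp e * ((infection (s, e) == x)%:R) <= 0 by lra.
  apply: sumr_le0 => e _; rewrite leNgt; apply/negP => h; by rewrite H in h.
move=> _.
have ex : infection (s, e) = x.
  by apply/eqP; move: He; case: (infection (s, e) == x) => //; rewrite mulr0 ltxx.
move: He; rewrite ex eqxx mulr1 => He.
have := rec (w := (s, e)); rewrite ex /okb => -> //.
by rewrite /sbim_weight /=; apply: mulr_gt0.
Qed.

Lemma exp_pair :
  expected_tests k p q1 q2 t =
  \sum_s Ps s * \sum_e Pe tp e * ((gt_run t (infection (s, e))).1)%:R.
Proof.
rewrite /expected_tests.
rewrite (eq_bigr (fun w : outcome N => Ps w.1 * (Pe tp w.2 * ((gt_run t (infection (w.1, w.2))).1)%:R))); last first.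
  by case=> s e _; rewrite /sbim_weight mulrA.
rewrite -(pair_bigA _ (fun s e => Ps s * (Pe tp e * ((gt_run t (infection (s, e))).1)%:R))) /=.
by apply: eq_bigr => s _; rewrite mulr_sumr.
Qed.

Lemma lower :
  \sum_s Ps s * \sum_v hb (pmfX tp s v true) <= expected_tests k p q1 q2 t.
Proof.
rewrite exp_pair; apply: ler_sum => s _.
have [P0|] := ltP 0 (Ps s).
  by apply: ler_wpM2l; [exact: ltW | exact: step_s].
move=> h; have -> : Ps s = 0 by apply/le_anti; rewrite h Ps_ge0.
by rewrite !mul0r.
Qed.
End Main.



Section ClaimC.
Variable R : realType.
Variables (m k : nat) (p q1 q2 : R).

Local Notation N := (m * k)%N.
Let tp := @trans_prob R k q1 q2 N.

Definition Aj (j : nat) : {set 'I_N} := [set u : 'I_N | (u %/ k)%N == j].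

Lemma comm_lt (v : 'I_N) : (v %/ k < m)%N.
Proof.
case: k v => [|k'] v; first by case: v => /= i; rewrite muln0.
by rewrite ltn_divLR //; exact: ltn_ord.
Qed.

Definition comm (v : 'I_N) : 'I_m := Ordinal (comm_lt v).

Lemma card_Aj (j : 'I_m) : #|Aj j| = k.
Proof.
have jm := ltn_ord j.
have lt i : (i < k)%N -> (j * k + i < N)%N.
  move=> ik; have : (j.+1 * k <= m * k)%N by rewrite leq_mul2r jm orbT.
  rewrite mulSn; lia.
pose f (i : 'I_k) : 'I_N := Ordinal (lt i (ltn_ord i)).
have finj : injective f.
  move=> a b /(congr1 val) /= h; apply: val_inj => /=; lia.
rewrite -[RHS](card_ord k) -cardsT -(card_imset _ finj); apply: eq_card => u.
rewrite inE; apply/eqP/imsetP => [hu|[i _ ->]].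
  have kp : (0 < k)%N by case: k u hu => [|k'] [u' hu'] //=; rewrite muln0 in hu'.
  exists (Ordinal (ltn_pmod u kp)); first by rewrite inE.
  apply: val_inj => /=; rewrite {1}(divn_eq u k) hu; lia.
rewrite /f /= divnMDl; last by case: k i => [[]|].
by rewrite divn_small ?addn0.
Qed.

Lemma card_CAj (j : 'I_m) : #|~: Aj j| = (N - k)%N.
Proof. have := cardsC (Aj j); rewrite card_Aj card_ord; lia. Qed.

Lemma hb1 : hb (1 : R) = 0.
Proof. rewrite /hb /xlog2 subrr eqxx oner_eq0 ln1 /=; ring. Qed.

Definition Sof (s : {ffun 'I_N -> bool}) := [set u | s u].

Lemma C1 s v : hb (pmfX tp s v true) = ((~~ s v)%:R : R) *
   hb (1 - (1 - q1) ^+ #|Sof s :&: Aj (v %/ k)| * (1 - q2) ^+ #|Sof s :\: Aj (v %/ k)|).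
Proof.
rewrite /pmfX /nu; case sv: (s v) => /=; first by rewrite subr0 hb1 mul0r.
rewrite mul1r; congr (hb (1 - _)).
pose P u := s u && (u %/ k == v %/ k)%N.
rewrite (bigID P) /= (bigID (fun u => s u) (fun u => ~~ P u)) /=.
rewrite [X in _ * (_ * X)]big1; last by move=> u /andP [_ /negbTE ->].
rewrite mulr1 (eq_bigr (fun _ => 1 - q1)); last first.
  move=> u /andP [su hc]; rewrite su /tp /trans_prob /same_comm hc.
  case: eqP => // uv; by move: su; rewrite uv sv.
rewrite [X in _ * X](eq_bigr (fun _ => 1 - q2)); last first.
  move=> u /andP [hn su]; rewrite su; move: hn; rewrite /P su /= => /negbTE hc.
  rewrite /tp /trans_prob /same_comm hc.
  by case: eqP => // uv; rewrite uv eqxx in hc.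
rewrite !prod_const_pred; congr (_ ^+ _ * _ ^+ _); apply: eq_card => u; rewrite !inE /P.
  by [].
by case: (s u); rewrite ?andbF ?andbT.
Qed.

Lemma sum_ind_cond (I : finType) (P Q : pred I) :
  \sum_(i | P i) ((Q i)%:R : R) = (#|[set i | P i && Q i]|)%:R.
Proof.
rewrite big_mkcond /= -sum_ind_card; apply: eq_bigr => i _.
by case: (P i).
Qed.

Lemma C2 (s : {ffun 'I_N -> bool}) (F : nat -> R) :
  \sum_(v : 'I_N) ((~~ s v)%:R : R) * F (v %/ k)%N =
  \sum_(j < m) ((k - #|Sof s :&: Aj j|)%:R * F j).
Proof.
rewrite (partition_big comm xpredT) //=; apply: eq_bigr => j _.
rewrite (eq_bigr (fun v => F j * ((~~ s v)%:R))); last first.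
  by move=> v /eqP <-; rewrite mulrC.
rewrite -mulr_sumr mulrC; congr (_ * _).
rewrite sum_ind_cond; congr (_%:R).
transitivity (#|Aj j| - #|Sof s :&: Aj j|)%N; last by rewrite card_Aj.
rewrite setIC -cardsD; apply: eq_card => u; rewrite !inE.
by rewrite andbC -(inj_eq val_inj).
Qed.

Lemma claimC :
  \sum_s Ps p s * \sum_v hb (pmfX tp s v true) =
  m%:R * (\sum_(z < k.+1) \sum_(z' < (m * k - k).+1)
            binpmf k p z * binpmf (m * k - k) p z' *
            ((k - z)%:R * hb (1 - (1 - q1) ^+ z * (1 - q2) ^+ z'))).
Proof.
pose G (z z' : nat) : R := (k - z)%:R * hb (1 - (1 - q1) ^+ z * (1 - q2) ^+ z').
have E (s : {ffun 'I_N -> bool}) : Ps p s * \sum_v hb (pmfX tp s v true) =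
    \sum_(j < m) Ps p s * G #|Sof s :&: Aj j| #|Sof s :\: Aj j|.
  rewrite (eq_bigr _ (fun v _ => C1 s v)).
  rewrite (C2 s (fun j => hb (1 - (1 - q1) ^+ #|Sof s :&: Aj j| * (1 - q2) ^+ #|Sof s :\: Aj j|))).
  by rewrite mulr_sumr.
rewrite (eq_bigr _ (fun s _ => E s)) exchange_big /=.
rewrite (eq_bigr (fun _ => \sum_(z < k.+1) \sum_(z' < (m * k - k).+1)
            binpmf k p z * binpmf (m * k - k) p z' * G z z')).
  by rewrite sumr_const card_ord mulr_natl.
move=> j _; have := claimD (Aj j) p G; rewrite card_Aj card_CAj => <-.
by apply: eq_bigr => s _.
Qed.
End ClaimC.


Theorem lemma5 (R : realType) (m k : nat) (p q1 q2 : R)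
  (hp : 0 < p <= 1) (hq1 : 0 <= q1 <= 1) (hq2 : 0 <= q2 <= 1)
  (t : gt_scheme (m * k)) :
  exact_recovery k p q1 q2 t ->
  m%:R * (\sum_(z < k.+1) \sum_(z' < (m * k - k).+1)
            binpmf k p z * binpmf (m * k - k) p z' *
            ((k - z)%:R * hb (1 - (1 - q1) ^+ z * (1 - q2) ^+ z')))
  <= expected_tests k p q1 q2 t.
Proof.
move=> rec; rewrite -(claimC m k p q1 q2).
exact: (lower hp hq1 hq2 rec).
Qed.
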